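(* Let the labels $\{1,\dots,k\}$ be partitioned into $b\ge2$ blocks of sizes $s_1,\dots,s_b$, let $L_{01,b}(i,j)=[i\text{ and }j\text{ are not in the same block}]$ with quadratic surrogate $\Phi_{quad}(f,y)=\frac1{2k}\|f+L_{01,b}(:,y)\|_2^2$, and let the scores be constrained to the subspace $\mathcal{F}_{01,b}=\mathrm{span}(L_{01,b})$ (the score vectors constant on each block). Then $$H_{\Phi_{quad},L_{01,b},\mathcal{F}_{01,b}}(\varepsilon)=\frac{\varepsilon^2}{4k}\min_{v\ne u}\frac{2s_vs_u}{s_v+s_u},\qquad0\le\varepsilon\le1.$$ In particular, if all blocks have the same size, $H_{\Phi_{quad},L_{01,b},\mathcal{F}_{01,b}}(\varepsilon)=\frac{\varepsilon^2}{4b}$.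
   Context: $\mathrm{span}(L)$ is the column space. $\mathrm{pred}(f)$ is the smallest index maximizing $f_c$. For $q\in\Delta_k$: $\ell(f,q)=\sum_cq_cL(\mathrm{pred}(f),c)$, $\phi(f,q)=\sum_cq_c\Phi(f,c)$, $\delta\ell(f,q)=\ell(f,q)-\inf_{\hat f\in\mathcal{F}}\ell(\hat f,q)$, $\delta\phi(f,q)=\phi(f,q)-\inf_{\hat f\in\mathcal{F}}\phi(\hat f,q)$; calibration function $H_{\Phi,L,\mathcal{F}}(\varepsilon)=\inf\{\delta\phi(f,q):f\in\mathcal{F},q\in\Delta_k,\delta\ell(f,q)\ge\varepsilon\}$ ($+\infty$ if empty). *)

(* Defs.v *)
From HB Require Import structures.
From mathcomp Require Import all_boot all_order all_algebra.
From mathcomp Require Import classical_sets reals constructive_ereal ereal.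
Set Implicit Arguments. Unset Strict Implicit. Unset Printing Implicit Defensive.
Import Order.TTheory GRing.Theory Num.Theory.
Local Open Scope ring_scope.
Local Open Scope classical_set_scope.

Section Generic.
Context {R : realType} {k : nat}.

Definition score := 'I_k -> R.

Definition span_set (L : 'I_k -> 'I_k -> R) : set score :=
  [set f | exists a : 'I_k -> R, forall c, f c = \sum_(j < k) a j * L c j].

Definition is_pred (f : score) (c : 'I_k) : bool :=
  [forall j, f j <= f c] && [forall j : 'I_k, (j < c)%N ==> (f j < f c)].

Definition pred_opt (f : score) : option 'I_k := [pick c | is_pred f c].

Definition simplex : set score :=
  [set q | (forall c, 0 <= q c) /\ \sum_(c < k) q c = 1].

(* l(f,q) = sum_c q_c L(pred f, c)  (pred f always exists when k > 0) *)
Definition task_loss (L : 'I_k -> 'I_k -> R) (f q : score) : R :=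
  match pred_opt f with
  | Some p => \sum_(c < k) q c * L p c
  | None => 0
  end.

Definition surr_risk (Phi : score -> 'I_k -> R) (f q : score) : R :=
  \sum_(c < k) q c * Phi f c.

Definition excess_loss (L : 'I_k -> 'I_k -> R) (F : set score) (f q : score) : R :=
  task_loss L f q - inf [set task_loss L g q | g in F].

Definition excess_surr (Phi : score -> 'I_k -> R) (F : set score) (f q : score) : R :=
  surr_risk Phi f q - inf [set surr_risk Phi g q | g in F].

(* calibration function H_{Phi,L,F}(eps); +oo if the set is empty *)
Definition calib (Phi : score -> 'I_k -> R) (L : 'I_k -> 'I_k -> R)
  (F : set score) (eps : R) : \bar R :=
  ereal_inf [set x : \bar R | exists f q, F f /\ simplex q /\
     eps <= excess_loss L F f q /\ x = (excess_surr Phi F f q)%:E].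

End Generic.

Section Blocks.
Context {R : realType} {k b : nat} (blk : 'I_k -> 'I_b).

Definition L01b : 'I_k -> 'I_k -> R := fun i j => (blk i != blk j)%:R.

Definition Phi_quad (f : 'I_k -> R) (y : 'I_k) : R :=
  (2 * k%:R)^-1 * \sum_(c < k) (f c + L01b c y) ^+ 2.

Definition block_size (v : 'I_b) : nat := #|[set i | blk i == v]|.

(* min_{v <> u} 2 s_v s_u / (s_v + s_u) (a finite set, so inf = min) *)
Definition min_harm : R :=
  inf [set x : R | exists v u : 'I_b, v != u /\
     x = 2 * (block_size v)%:R * (block_size u)%:R
         / ((block_size v)%:R + (block_size u)%:R)].

End Blocks.

(* Main.v *)
Require Import Defs.
From HB Require Import structures.
From mathcomp Require Import all_boot all_order all_algebra.
From mathcomp Require Import classical_sets reals constructive_ereal ereal.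
From mathcomp Require Import ring lra.
Import Order.TTheory GRing.Theory Num.Theory.
Local Open Scope ring_scope.
Local Open Scope classical_set_scope.

Set Implicit Arguments.
Unset Strict Implicit.
Section P14.
Variables (R : realType) (k b : nat) (blk : 'I_k -> 'I_b).

Local Notation L := (@L01b R k b blk).
Local Notation Phi := (@Phi_quad R k b blk).
Local Notation F := (@span_set R k L).
Local Notation s u := ((block_size blk u)%:R : R).

Lemma sum_blk (F : 'I_b -> R) :
  \sum_(c < k) F (blk c) = \sum_(u < b) s u * F u.
Proof.
rewrite (partition_big blk predT) //=; apply: eq_bigr => u _.
rewrite (eq_bigr (fun _ => F u)); last by move=> i /eqP ->.
rewrite (sumr_const (fun i => blk i == u)) /block_size mulr_natl.
congr (_ *+ _).
apply: eq_card => i; apply/idP/idP => [h|/set_mem //]; exact: mem_set.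
Qed.


Lemma bsE u : block_size blk u = #|[pred i | blk i == u]|.
Proof.
apply: eq_card => i; apply/idP/idP => [/set_mem //|h]; exact: mem_set.
Qed.

Lemma s_gt0 u : (exists i, blk i = u) -> 0 < s u.
Proof.
move=> [i hi]; rewrite ltr0n bsE; apply/card_gt0P; exists i; by rewrite inE hi.
Qed.

Lemma s_ge0 u : 0 <= s u.
Proof. by rewrite ler0n. Qed.

Lemma sum_delta (G : 'I_b -> R) x : \sum_(u < b) G u * (x == u)%:R = G x.
Proof.
rewrite (bigD1 x) //= eqxx mulr1 big1 ?addr0 // => u hu.
by rewrite eq_sym (negbTE hu) mulr0.
Qed.

Lemma sum_delta' (G : 'I_b -> R) x : \sum_(u < b) (x == u)%:R * G u = G x.
Proof. rewrite -[RHS](sum_delta G x); apply: eq_bigr => u _; exact: mulrC. Qed.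

Lemma span_const f : span_set L f -> forall c c', blk c = blk c' -> f c = f c'.
Proof.
move=> [a ha] c c' e; rewrite !ha; apply: eq_bigr => j _; by rewrite /L01b e.
Qed.

Lemma span_add f g : span_set L f -> span_set L g ->
  span_set L (fun c => f c + g c).
Proof.
move=> [a ha] [a' ha']; exists (fun j => a j + a' j) => c.
by rewrite ha ha' -big_split /=; apply: eq_bigr => j _; rewrite mulrDl.
Qed.

Lemma span_block (hb : (2 <= b)%N) (hs : forall u, exists i, blk i = u) (g : 'I_b -> R) :
  span_set L (fun c => g (blk c)).
Proof.
pose D := \sum_(u < b) g u.
pose al u := D / (b%:R - 1) - g u.
exists (fun j => al (blk j) / s (blk j)) => c.
rewrite (sum_blk (fun u => al u / s u * (blk c != u)%:R)).
have -> : \sum_(u < b) s u * (al u / s u * (blk c != u)%:R)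
   = \sum_(u < b) (al u - al u * (blk c == u)%:R).
  apply: eq_bigr => u _; have := s_gt0 (hs u) => hp.
  case: (blk c == u) => /=; first by rewrite !mulr0 mulr1 subrr.
  rewrite mulr1 mulr0 subr0; field; exact: lt0r_neq0.
rewrite sumrB sum_delta /al sumrB sumr_const card_ord -/D.
have hb1 : b%:R - 1 != 0 :> R.
  rewrite subr_eq0 pnatr_eq1; by case: b hb => [|[|]].
have -> : (D / (b%:R - 1)) *+ b = b%:R * (D / (b%:R - 1)) by rewrite mulr_natl.
field; exact: hb1.
Qed.

Definition Qb (q : 'I_k -> R) u := \sum_(j < k) q j * (blk j == u)%:R.
Definition Lq (q : 'I_k -> R) c := \sum_(y < k) q y * L c y.
Definition Cq (q : 'I_k -> R) :=
  \sum_(y < k) q y * \sum_(c < k) (L c y)^+2 - \sum_(c < k) (Lq q c)^+2.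

Lemma Lq_eq q c : \sum_(j < k) q j = 1 -> Lq q c = 1 - Qb q (blk c).
Proof.
move=> h1; rewrite -[X in X - _]h1 /Lq /Qb -sumrB; apply: eq_bigr => j _.
rewrite /L01b; case: (eqVneq (blk c) (blk j)) => [_|ne] /=; first by rewrite mulr0 mulr1 subrr.
by rewrite mulr0 mulr1 subr0.
Qed.

Lemma pred_uniq (f : 'I_k -> R) c c' : is_pred f c -> is_pred f c' -> c = c'.
Proof.
move=> /andP[/forallP h1 /forallP h2] /andP[/forallP h1' /forallP h2'].
apply/val_inj; case: (ltngtP c c') => // H.
- by move: (implyP (h2' c) H); rewrite ltNge h1.
- by move: (implyP (h2 c') H); rewrite ltNge h1'.
Qed.

Lemma pred_opt_some (f : 'I_k -> R) c : is_pred f c -> pred_opt f = Some c.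
Proof.
rewrite /pred_opt; case: pickP => [c' hc'|hn] hc; first by rewrite (pred_uniq hc' hc).
by rewrite hn in hc.
Qed.

Lemma pred_exists (i0 : 'I_k) (f : 'I_k -> R) : exists c, is_pred f c.
Proof.
case: (@Order.TotalTheory.arg_maxP _ R _ i0 xpredT f isT) => m _ hm.
case: (@arg_minnP _ m (fun i => f i == f m) (fun i => nat_of_ord i) (eqxx _)) => c /eqP hc hcmin.
exists c; apply/andP; split; apply/forallP => j.
- rewrite hc; exact: hm.
- apply/implyP => hj; rewrite hc lt_neqAle; apply/andP; split; last exact: hm.
  apply/negP => /eqP e; have := hcmin j (introT eqP e).
  by rewrite leqNgt hj.
Qed.

Lemma task_loss_p (f q : 'I_k -> R) p : \sum_(j < k) q j = 1 -> is_pred f p ->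
  task_loss L f q = 1 - Qb q (blk p).
Proof.
move=> h1 hp; rewrite /task_loss (pred_opt_some hp) -(Lq_eq p h1) /Lq.
done.
Qed.

Lemma surr_dec (q f : 'I_k -> R) : \sum_(j < k) q j = 1 ->
  surr_risk Phi f q = (2 * k%:R)^-1 * (\sum_(c < k) (f c + Lq q c)^+2 + Cq q).
Proof.
move=> h1; rewrite /surr_risk /Phi_quad.
transitivity ((2 * k%:R)^-1 * \sum_(y < k) \sum_(c < k) q y * (f c + L c y)^+2).
  rewrite mulr_sumr; apply: eq_bigr => y _.
  by rewrite mulrCA mulr_sumr.
rewrite exchange_big /=.
congr (_ * _); rewrite /Cq.
have -> : \sum_(y < k) q y * \sum_(c < k) (L c y)^+2 =
          \sum_(c < k) \sum_(y < k) q y * (L c y)^+2.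
  rewrite exchange_big /=; apply: eq_bigr => y _; by rewrite mulr_sumr.
rewrite -sumrB -big_split /=; apply: eq_bigr => c _.
transitivity (\sum_(y < k) (f c ^+ 2 * q y + 2 * f c * (q y * L c y) + q y * L c y ^+ 2)).
  by apply: eq_bigr => y _; ring.
rewrite !big_split /= -!mulr_sumr h1 /Lq; ring.
Qed.

Lemma surr_inf q : \sum_(j < k) q j = 1 ->
  inf [set surr_risk Phi g q | g in F] = (2 * k%:R)^-1 * Cq q.
Proof.
move=> h1.
have hk : 0 <= (2 * k%:R)^-1 :> R by rewrite invr_ge0 mulr_ge0 ?ler0n.
have hel : forall g, (2 * k%:R)^-1 * Cq q <= surr_risk Phi g q.
  move=> g; rewrite surr_dec // ler_wpM2l // lerDr; apply: sumr_ge0 => c _; exact: sqr_ge0.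
have hF : F (fun c => - Lq q c).
  exists (fun j => - q j) => c; rewrite /Lq -sumrN; apply: eq_bigr => j _; by rewrite mulNr.
have hval : surr_risk Phi (fun c => - Lq q c) q = (2 * k%:R)^-1 * Cq q.
  rewrite surr_dec // big1 ?add0r // => c _; by rewrite addNr expr2 mul0r.
apply/le_anti/andP; split.
- rewrite -hval; apply: ge_inf; last by exists (fun c => - Lq q c).
  by exists ((2 * k%:R)^-1 * Cq q) => x [g _ <-]; exact: hel.
- apply: lb_le_inf; last by move=> x [g _ <-]; exact: hel.
  by exists (surr_risk Phi (fun c => - Lq q c) q); exists (fun c => - Lq q c).
Qed.

Lemma excess_surr_eq q f : \sum_(j < k) q j = 1 ->
  excess_surr Phi F f q = (2 * k%:R)^-1 * \sum_(c < k) (f c + Lq q c)^+2.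
Proof. by move=> h1; rewrite /excess_surr surr_dec // surr_inf // mulrDr addrK. Qed.

Lemma tl_ge0 (g q : 'I_k -> R) : (forall c, 0 <= q c) -> 0 <= task_loss L g q.
Proof.
move=> hq; rewrite /task_loss; case: pred_opt => [p|] //.
by apply: sumr_ge0 => c _; apply: mulr_ge0 => //; rewrite ler0n.
Qed.

Lemma tl_inf_le (hb : (2 <= b)%N) (hs : forall u, exists i, blk i = u) q w :
  \sum_(j < k) q j = 1 -> (forall c, 0 <= q c) ->
  inf [set task_loss L g q | g in F] <= 1 - Qb q w.
Proof.
move=> h1 hq.
have hF := span_block hb hs (fun u => (u == w)%:R).
have [i hi] := hs w.
have [p hp] := pred_exists i (fun c => (blk c == w)%:R).
have hpw : blk p = w.
  move: (hp) => /andP[/forallP h _]; move: (h i); rewrite hi eqxx.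
  by case: eqP => // _; rewrite ler10.
apply: ge_inf.
  by exists 0 => x [g _ <-]; exact: tl_ge0.
exists (fun c => (blk c == w)%:R) => //.
by rewrite (task_loss_p h1 hp) hpw.
Qed.

Lemma tl_inf_ge (i0 : 'I_k) q m : \sum_(j < k) q j = 1 -> (forall u, Qb q u <= m) ->
  1 - m <= inf [set task_loss L g q | g in F].
Proof.
move=> h1 hm; apply: lb_le_inf.
  exists (task_loss L (fun _ => 0) q); exists (fun _ => 0) => //.
  by exists (fun _ => 0) => c; rewrite big1 // => j _; rewrite mul0r.
move=> x [g _ <-]; have [p hp] := pred_exists i0 g.
by rewrite (task_loss_p h1 hp) lerD2l lerN2.
Qed.

Definition hh v u : R := 2 * s v * s u / (s v + s u).

Lemma hh_ge0 v u : 0 <= hh v u.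
Proof. by rewrite /hh divr_ge0 ?mulr_ge0 ?addr_ge0 ?s_ge0. Qed.

Lemma hhC v u : hh v u = hh u v.
Proof. rewrite /hh; congr (_ / _); [by rewrite mulrAC | by rewrite addrC]. Qed.

Lemma mh_le v u : v != u -> @min_harm R k b blk <= hh v u.
Proof.
move=> hvu; apply: ge_inf; last by exists v, u.
by exists 0 => x [v' [u' [_ ->]]]; exact: hh_ge0.
Qed.

Lemma mh_attained (hb : (2 <= b)%N) : exists v u, v != u /\ hh v u <= @min_harm R k b blk.
Proof.
pose u0 : 'I_b := Ordinal (ltnW hb).
pose u1 : 'I_b := Ordinal hb.
have P0 : (fun p : 'I_b * 'I_b => p.1 != p.2) (u0, u1) by [].
case: (@Order.TotalTheory.arg_minP _ R _ (u0, u1) (fun p => p.1 != p.2) (fun p => hh p.1 p.2) P0).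
move=> [v u] /= hvu hmin; exists v, u; split => //.
apply: lb_le_inf; first by exists (hh v u); exists v, u.
by move=> x [v' [u' [hne ->]]]; exact: (hmin (v', u') hne).
Qed.

Lemma key_ineq (eps a c sv sw : R) : 0 <= eps -> eps <= a - c -> 0 < sv -> 0 < sw ->
  eps ^+ 2 * (sv * sw) <= (sv * a ^+ 2 + sw * c ^+ 2) * (sv + sw).
Proof.
move=> he hac hv hw.
have h1 : eps ^+ 2 <= (a - c) ^+ 2 by rewrite ler_pXn2r // ?nnegrE //; lra.
have h2 : 0 <= (sv * a + sw * c) ^+ 2 by exact: sqr_ge0.
have hp : 0 < sv * sw by exact: mulr_gt0.
have e : (sv * a ^+ 2 + sw * c ^+ 2) * (sv + sw) = (sv * sw) * (a - c) ^+ 2 + (sv * a + sw * c) ^+ 2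
  by ring.
rewrite e mulrC; have := ler_wpM2l (ltW hp) h1; lra.
Qed.

Lemma lower (hb : (2 <= b)%N) (hs : forall u, exists i, blk i = u) eps f q :
  0 <= eps -> F f -> simplex q -> eps <= excess_loss L F f q ->
  eps ^+ 2 / (4 * k%:R) * @min_harm R k b blk <= excess_surr Phi F f q.
Proof.
move=> he hf [hq h1] hl.
pose u0 : 'I_b := Ordinal (ltnW hb).
have [i0 _] := hs u0.
pose rep u := odflt i0 [pick i | blk i == u].
have hrep : forall u, blk (rep u) = u.
  move=> u; rewrite /rep; case: pickP => [i /eqP //|hn].
  by have [i hi] := hs u; move: (hn i); rewrite hi eqxx.
have [p hp] := pred_exists i0 f.
set v := blk p.
case: (@Order.TotalTheory.arg_maxP _ R _ u0 xpredT (Qb q) isT) => w _ hw.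
have hQ : eps <= Qb q w - Qb q v.
  move: hl; rewrite /excess_loss (task_loss_p h1 hp) => hl.
  have := tl_inf_ge i0 (m := Qb q w) h1 (fun u => hw u isT); lra.
rewrite excess_surr_eq //.
have hk0 : (0 < k)%N by apply: (leq_ltn_trans _ (ltn_ord i0)).
have hk : 0 < k%:R :> R by rewrite ltr0n.
pose e u := f (rep u) + 1 - Qb q u.
have hsum : \sum_(c < k) (f c + Lq q c)^+2 = \sum_(u < b) s u * e u ^+ 2.
  rewrite -(sum_blk (fun u => e u ^+ 2)); apply: eq_bigr => c _.
  by rewrite Lq_eq // /e -(span_const hf (esym (hrep (blk c)))) addrA.
rewrite hsum.
have hk2 : 0 <= (2 * k%:R)^-1 :> R by rewrite invr_ge0 mulr_ge0 ?ler0n.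
case: (eqVneq v w) => [hvw|hvw].
  have -> : eps = 0 by move: hQ; rewrite hvw subrr => hQ; apply/le_anti/andP.
  rewrite expr0n /= !mul0r; apply: mulr_ge0 => //.
  by apply: sumr_ge0 => u _; apply: mulr_ge0; rewrite ?s_ge0 ?sqr_ge0.
have hge : s v * e v ^+ 2 + s w * e w ^+ 2 <= \sum_(u < b) s u * e u ^+ 2.
  rewrite (bigD1 v) //= (bigD1 w) /=; last by rewrite eq_sym hvw.
  rewrite addrA lerDl; apply: sumr_ge0 => u _; apply: mulr_ge0; rewrite ?s_ge0 ?sqr_ge0 //.
have hfv : f (rep v) = f p by exact: (span_const hf (hrep v)).
have hfw : f (rep w) <= f p by move: hp => /andP[/forallP h _]; exact: h.
have hed : eps <= e v - e w by rewrite /e; lra.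
have hmh := mh_le hvw.
have hsv : 0 < s v by exact: s_gt0.
have hsw : 0 < s w by exact: s_gt0.
have hS : 0 < s v + s w by exact: addr_gt0.
apply: (le_trans (y := eps ^+ 2 / (4 * k%:R) * hh v w)).
  by apply: ler_wpM2l => //; rewrite divr_ge0 ?sqr_ge0 // mulr_ge0 ?ler0n.
apply: (le_trans _ (ler_wpM2l hk2 hge)).
have -> : eps ^+ 2 / (4 * k%:R) * hh v w =
   (2 * k%:R)^-1 * ((eps ^+ 2 * (s v * s w)) / (s v + s w)).
  rewrite /hh; field; apply/andP; split; exact: lt0r_neq0.
apply: ler_wpM2l => //; rewrite ler_pdivrMr //.
exact: key_ineq.
Qed.

Lemma pos_aux (eps t : R) : 0 <= eps -> eps <= 1 -> 0 < t -> 0 < (1 - eps) / 2 + eps * t.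
Proof.
move=> h0 h1 ht; case: (lerP t (1/2)) => hth.
- have : 0 <= (1 - eps) * (1/2 - t) by apply: mulr_ge0; lra.
  nra.
- have : 0 <= eps * (t - 1/2) by apply: mulr_ge0; lra.
  nra.
Qed.

Lemma upper (hb : (2 <= b)%N) (hs : forall u, exists i, blk i = u) eps :
  0 <= eps -> eps <= 1 ->
  (calib Phi L F eps <= ((eps ^+ 2 / (4 * k%:R)) * @min_harm R k b blk)%:E)%E.
Proof.
move=> he0 he1.
have [v0 [w0 [hne hmin]]] := mh_attained hb.
have [i0 hi0] := hs v0.
pose P := fun i => (blk i == v0) || (blk i == w0).
have P0 : P i0 by rewrite /P hi0 eqxx.
case: (@arg_minnP _ i0 P (fun i => nat_of_ord i) P0) => m hPm hmmin.
have [v [w [hvw [hvh [hmv hmj]]]]] : exists v w, v != w /\ (hh v w <= @min_harm R k b blk) /\ blk m = v /\ forall j, (blk j == v) || (blk j == w) -> (m <= j)%N.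
  move: hPm; rewrite /P; case/orP => /eqP hm.
  - exists v0, w0; split => //; split => //; split => // j hj; exact: hmmin.
  - exists w0, v0; split; first by rewrite eq_sym.
    split; first by rewrite hhC. split => // j hj; apply: hmmin; by rewrite /P orbC.
have hk0 : (0 < k)%N by apply: (leq_ltn_trans _ (ltn_ord i0)).
have hk : 0 < k%:R :> R by rewrite ltr0n.
have hsv : 0 < s v by exact: s_gt0.
have hsw : 0 < s w by exact: s_gt0.
have hS : 0 < s v + s w by exact: addr_gt0.
have hwv : (w == v) = false by apply/negbTE; rewrite eq_sym.
have hvw' : (v == w) = false by apply/negbTE.
pose G u := (w == u)%:R * ((1 + eps) / 2) + (v == u)%:R * ((1 - eps) / 2).
pose q i := G (blk i) / s (blk i).
have hGv : G v = (1 - eps) / 2 by rewrite /G hwv eqxx mul0r mul1r add0r.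
have hGw : G w = (1 + eps) / 2 by rewrite /G hvw' eqxx mul0r mul1r addr0.
have hGo : forall u, u != v -> u != w -> G u = 0.
  by move=> u hu1 hu2; rewrite /G eq_sym (negbTE hu2) eq_sym (negbTE hu1) !mul0r addr0.
have hQb : forall u, Qb q u = G u.
  move=> u; rewrite /Qb /q (sum_blk (fun x => G x / s x * (x == u)%:R)).
  rewrite -[RHS](sum_delta G u); apply: eq_bigr => x _.
  have := s_gt0 (hs x) => hx.
  rewrite eq_sym mulrA mulrCA divff ?mulr1 //; exact: lt0r_neq0.
have h1 : \sum_(j < k) q j = 1.
  rewrite /q (sum_blk (fun x => G x / s x)).
  transitivity (\sum_(x < b) G x).
    apply: eq_bigr => x _; have := s_gt0 (hs x) => hx.
    rewrite mulrCA divff ?mulr1 //; exact: lt0r_neq0.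
  rewrite /G big_split /= (sum_delta' (fun _ => (1 + eps) / 2) w).
  rewrite (sum_delta' (fun _ => (1 - eps) / 2) v) /=; lra.
have hq0 : forall i, 0 <= q i.
  move=> i; rewrite /q divr_ge0 ?s_ge0 // /G addr_ge0 // mulr_ge0 ?ler0n //; lra.
pose S := s v + s w.
pose d u := (v == u)%:R * (eps * s w / S) - (w == u)%:R * (eps * s v / S).
pose g u := G u - 1 + d u.
pose f c := g (blk c).
have hf : F f := span_block hb hs g.
have hdv : d v = eps * s w / S by rewrite /d eqxx hwv mul1r mul0r subr0.
have hdw : d w = - (eps * s v / S) by rewrite /d eqxx hvw' mul1r mul0r sub0r.
have hdo : forall u, u != v -> u != w -> d u = 0.
  by move=> u hu1 hu2; rewrite /d [v == u]eq_sym [w == u]eq_sym (negbTE hu2) (negbTE hu1) !mul0r subr0.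
have hgvw : g v = g w.
  rewrite /g hGv hGw hdv hdw /S; field; exact: lt0r_neq0.
have hgv : -1 < g v.
  rewrite /g hGv hdv.
  have := pos_aux he0 he1 (divr_gt0 hsw hS); rewrite /S mulrA; lra.
have hgo : forall u, u != v -> u != w -> g u = -1.
  by move=> u hu1 hu2; rewrite /g hGo // hdo // addr0 add0r.
have hpm : is_pred f m.
  apply/andP; split; apply/forallP => j; rewrite /f hmv.
  - case: (eqVneq (blk j) v) => [->|hjv] //.
    case: (eqVneq (blk j) w) => [->|hjw]; first by rewrite hgvw.
    rewrite hgo //; exact: ltW.
  - apply/implyP => hj.
    have : ~~ ((blk j == v) || (blk j == w)).
      by apply/negP => H; have := hmj j H; rewrite leqNgt hj.
    by case/norP => hjv hjw; rewrite hgo.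
have hel : eps <= excess_loss L F f q.
  rewrite /excess_loss (task_loss_p h1 hpm) hmv hQb hGv.
  have := tl_inf_le hb hs w h1 hq0; rewrite hQb hGw; lra.
have hes : excess_surr Phi F f q = (2 * k%:R)^-1 * (s v * (eps * s w / S) ^+ 2 + s w * (eps * s v / S) ^+ 2).
  rewrite excess_surr_eq //; congr (_ * _).
  transitivity (\sum_(c < k) d (blk c) ^+ 2).
    apply: eq_bigr => c _; rewrite Lq_eq // hQb /f /g; congr (_ ^+ 2); ring.
  rewrite (sum_blk (fun u => d u ^+ 2)).
  transitivity (\sum_(u < b) ((v == u)%:R * (s u * (eps * s w / S) ^+ 2) +
                            (w == u)%:R * (s u * (eps * s v / S) ^+ 2))).
    apply: eq_bigr => u _.
    case: (eqVneq v u) => [<-|hvu]; first by rewrite hdv hwv /=; ring.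
    case: (eqVneq w u) => [<-|hwu]; first by rewrite hdw /=; ring.
    by rewrite hdo 1?eq_sym // expr2 !mulr0 !mul0r addr0.
  rewrite big_split /= (sum_delta' (fun u => s u * (eps * s w / S) ^+ 2) v).
  by rewrite (sum_delta' (fun u => s u * (eps * s v / S) ^+ 2) w).
apply: (@le_trans _ _ ((excess_surr Phi F f q)%:E)).
  rewrite /calib; apply: ereal_inf_lbound; exists f, q; split => //; split => //.
rewrite lee_fin hes.
apply: (le_trans _ (ler_wpM2l _ hvh)); last by rewrite divr_ge0 ?sqr_ge0 // mulr_ge0 ?ler0n.
rewrite /hh /S le_eqVlt; apply/orP; left; apply/eqP; field.
apply/andP; split; exact: lt0r_neq0.
Qed.

End P14.

Unset Implicit Arguments.
Unset Strict Implicit.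

Theorem proposition14 (R : realType) (k b : nat) (blk : 'I_k -> 'I_b) :
  (2 <= b)%N ->
  (forall v : 'I_b, exists i : 'I_k, blk i = v) ->
  (forall eps : R, 0 <= eps <= 1 ->
     calib (Phi_quad blk) (L01b blk) (span_set (L01b blk)) eps =
     ((eps ^+ 2 / (4 * k%:R)) * @min_harm R k b blk)%:E)
  /\
  ((forall v u : 'I_b, block_size blk v = block_size blk u) ->
   forall eps : R, 0 <= eps <= 1 ->
     calib (Phi_quad blk) (L01b blk) (span_set (L01b blk)) eps =
     (eps ^+ 2 / (4 * b%:R))%:E).
Proof.
move=> hb hs.
have part1 : forall eps : R, 0 <= eps <= 1 ->
     calib (Phi_quad blk) (L01b blk) (span_set (L01b blk)) eps =
     ((eps ^+ 2 / (4 * k%:R)) * @min_harm R k b blk)%:E.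
  move=> eps /andP[he0 he1]; apply/le_anti/andP; split.
    exact: upper.
  rewrite /calib; apply: le_ereal_inf_tmp => x [f [q [hf [hq [hl ->]]]]].
  rewrite lee_fin; exact: lower.
split => // heq eps he; rewrite part1 //; congr (_%:E).
pose u0 : 'I_b := Ordinal (ltnW hb).
pose u1 : 'I_b := Ordinal hb.
pose s0 : R := (block_size blk u0)%:R.
have hs0 : 0 < s0 by exact: s_gt0.
have hsu : forall u, (block_size blk u)%:R = s0 by move=> u; rewrite /s0 (heq u u0).
have hk : k%:R = b%:R * s0 :> R.
  have := sum_blk blk (fun _ => 1 : R).
  rewrite sumr_const card_ord.
  under eq_bigr do rewrite hsu mulr1.
  by rewrite sumr_const card_ord mulr_natl => ->.
have hmh : @min_harm R k b blk = s0.
  have hhs : forall v u, 2 * (block_size blk v)%:R * (block_size blk u)%:R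
         / ((block_size blk v)%:R + (block_size blk u)%:R) = s0 :> R.
    move=> v u; rewrite !hsu; field; rewrite -mulr2n; rewrite mulrn_eq0 negb_or /=; exact: lt0r_neq0.
  apply/le_anti/andP; split.
    apply: ge_inf; last by exists u0, u1; split => //; rewrite hhs.
    by exists 0 => x [v [u [_ ->]]]; rewrite hhs ltW.
  apply: lb_le_inf; first by exists s0, u0, u1; split => //; rewrite hhs.
  by move=> x [v [u [_ ->]]]; rewrite hhs.
rewrite hmh hk; field.
have hb0 : b%:R != 0 :> R by rewrite pnatr_eq0; case: b hb {blk hs heq u0 u1 s0 hs0 hsu hk hmh part1}.
apply/andP; split => //; exact: lt0r_neq0.
Qed.
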